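(* Let $\mathcal{G}$ be a fractionally $\mathrm{tree}\text{-}\alpha$-fragile class of graphs and let $c\in\mathbb{N}$ be arbitrary. Then there exists $k\in\mathbb{N}$ such that every $G\in\mathcal{G}$ with $|V(G)|\ge k$ satisfies $s\text{-}\alpha(G)<|V(G)|/c$. In particular, every fractionally $\mathrm{tree}\text{-}\alpha$-fragile class has separators of sublinear independence number.
   Context: $\alpha$ denotes independence number. The tree-independence number $\mathrm{tree}\text{-}\alpha(G)$ is the minimum over tree decompositions $(T,\{X_t\})$ of $G$ (tree $T$, bags covering vertices and edges, each vertex's bags forming a subtree) of $\max_t\alpha(G[X_t])$. For $\beta\le1$, a $\beta$-general cover of $G$ is a multiset $\mathcal{C}$ of subsets of $V(G)$ with each vertex in at least $\beta|\mathcal{C}|$ members. A class $\mathcal{G}$ is fractionally $\mathrm{tree}\text{-}\alpha$-fragile if there is $f\colon\mathbb{N}\to\mathbb{N}$ such that for every $r\in\mathbb{N}$ every $G\in\mathcal{G}$ has a $(1-1/r)$-general cover $\mathcal{C}$ with $\mathrm{tree}\text{-}\alpha(G[C])\le f(r)$ for all $C\in\mathcal{C}$. A separation of $G$ is a pair $(A,B)$ of vertex sets with $A\cup B=V(G)$ and no edge between $A\setminus B$ and $B\setminus A$; it is balanced if $|A\setminus B|,|B\setminus A|\le 2|V(G)|/3$; its independence number is $\alpha(G[A\cap B])$. $s\text{-}\alpha(G)$ is the minimum independence number of a balanced separation of $G$. For a class $\mathcal{G}$, $s\text{-}\alpha_{\mathcal{G}}(n)=\max\{s\text{-}\alpha(G):G\in\mathcal{G},|V(G)|\le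 n\}$, and $\mathcal{G}$ has separators of sublinear independence number if $s\text{-}\alpha_{\mathcal{G}}(n)/n\to0$. *)

(* Defs.v *)
From mathcomp Require Import all_boot.
Set Implicit Arguments. Unset Strict Implicit. Unset Printing Implicit Defensive.

Definition graph_class := forall V : finType, rel V -> Prop.

Definition simple_graph (V : finType) (e : rel V) :=
  symmetric e /\ irreflexive e.

Section Defs.
Variables (V : finType) (e : rel V).

Definition indep (S : {set V}) : bool :=
  [forall x in S, forall y in S, ~~ e x y].

Definition alpha (X : {set V}) : nat :=
  \max_(S : {set V} | (S \subset X) && indep S) #|S|.

End Defs.

Definition is_tree (I : finType) (t : rel I) : Prop :=
  [/\ symmetric t, irreflexive t, 0 < #|I|,
      (forall x y : I, connect t x y) &
      (forall s : seq I, uniq s -> 3 <= size s -> ~~ cycle t s)].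

Definition tree_decomp_of (V : finType) (e : rel V) (C : {set V})
  (I : finType) (t : rel I) (bag : I -> {set V}) : Prop :=
  [/\ is_tree t,
      (forall i, bag i \subset C),
      (forall v, v \in C -> exists i, v \in bag i),
      (forall x y, x \in C -> y \in C -> e x y ->
         exists i, (x \in bag i) && (y \in bag i)) &
      (forall v, v \in C -> forall i j, v \in bag i -> v \in bag j ->
         connect [rel a b | [&& t a b, v \in bag a & v \in bag b]] i j)].

(* tree-alpha(G[C]) <= k : some tree decomposition of G[C] has all bags
   of independence number <= k (unfolding the minimum). *)
Definition tree_alpha_le (V : finType) (e : rel V) (C : {set V}) (k : nat)
  : Prop :=
  exists (I : finType) (t : rel I) (bag : I -> {set V}),
    tree_decomp_of e C t bag /\ forall i, alpha e (bag i) <= k.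

(* (1 - 1/r)-general cover (r >= 1): nonempty multiset of vertex subsets,
   each vertex in at least (1-1/r)|cs| members, i.e.
   r * count >= (r-1) * |cs|. *)
Definition general_cover (V : finType) (r : nat) (cs : seq {set V}) : Prop :=
  0 < size cs /\
  forall v : V, (r - 1) * size cs <= r * count (fun C : {set V} => v \in C) cs.

Definition frac_tree_alpha_fragile (P : graph_class) : Prop :=
  exists f : nat -> nat, forall r, 0 < r ->
    forall (V : finType) (e : rel V), P V e ->
      exists cs : seq {set V}, general_cover r cs /\
        forall C, C \in cs -> tree_alpha_le e C (f r).

Section Sep.
Variables (V : finType) (e : rel V).

Definition separation (A B : {set V}) : bool :=
  (A :|: B == setT) &&
  [forall x in A :\: B, forall y in B :\: A, ~~ e x y && ~~ e y x].

Definition balanced_sep (A B : {set V}) : bool :=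
  [&& separation A B, 3 * #|A :\: B| <= 2 * #|V| & 3 * #|B :\: A| <= 2 * #|V|].

(* s-alpha(G): minimum independence number of a balanced separation
   ((setT,setT) is always one, so the default #|V| is never used). *)
Definition s_alpha : nat :=
  \big[minn/#|V|]_(p : {set V} * {set V} | balanced_sep p.1 p.2)
     alpha e (p.1 :&: p.2).
End Sep.

(* s-alpha_G(n)/n -> 0, where s-alpha_G(n) = max{s-alpha(G) : G in P, |V(G)| <= n}:
   for every c >= 1, eventually c * s-alpha_G(n) < n. *)
Definition sublinear_separators (P : graph_class) : Prop :=
  forall c, 0 < c -> exists N, forall n, N <= n ->
    forall (V : finType) (e : rel V), P V e -> #|V| <= n ->
      c * s_alpha e < n.

(* Main.v *)
Require Import Defs.
From mathcomp Require Import all_boot zify.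
Set Implicit Arguments. Unset Strict Implicit. Unset Printing Implicit Defensive.

Lemma connect_uniqP (T : finType) (e : rel T) x y :
  connect e x y -> exists p, [/\ path e x p, uniq (x :: p) & last x p = y].
Proof.
move/connectP=> [p pth ->]; case/shortenP: pth => p' pth' uq _.
by exists p'.
Qed.

Section Tree.
Variables (I : finType) (t : rel I).
Hypothesis tsym : symmetric t.
Hypothesis tirr : irreflexive t.
Hypothesis tconn : forall x y, connect t x y.
Hypothesis tacyc : forall s : seq I, uniq s -> 3 <= size s -> ~~ cycle t s.

Definition avoid (x : I) := [rel a b | [&& t a b, a != x & b != x]].
Definition tcomp (x u : I) := [set v | (v != x) && connect (avoid x) u v].

Lemma avoid_sym x : connect_sym (avoid x).
Proof.
apply: sym_connect_sym => a b /=; by rewrite tsym; case: (a != x); case: (b != x); rewrite ?andbF ?andbT.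
Qed.

Lemma comp_eq x u v : v \in tcomp x u -> tcomp x v = tcomp x u.
Proof.
rewrite inE => /andP[_ cuv]; apply/setP => z; rewrite !inE.
case: (z != x) => //=.
apply/idP/idP => H; first exact: connect_trans cuv H.
by rewrite avoid_sym in cuv; exact: connect_trans cuv H.
Qed.

Lemma path_avoid x a p : path t a p -> x \notin a :: p -> path (avoid x) a p.
Proof.
elim: p a => //= b p IH a /andP[tab pb]; rewrite in_cons => /norP[xa]; rewrite in_cons => /norP[xb xp].
rewrite /= tab eq_sym xa eq_sym xb /=; apply: IH => //; by rewrite in_cons negb_or xb.
Qed.

Lemma step x u : u != x -> exists2 y, t x y & y \in tcomp x u.
Proof.
move=> ux; have [p [pth uq lst]] := connect_uniqP (tconn x u).
case: p pth uq lst => [|y p] /=; first by move=> _ _ E; rewrite E eqxx in ux.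
move=> /andP[txy pth] /andP[xn uq] lst; exists y => //.
have xy : y != x by apply: contraNneq xn => ->; rewrite inE eqxx.
rewrite inE xy /= avoid_sym; apply/connectP; exists p => //.
exact: path_avoid.
Qed.

Lemma acyc x y u : t x y -> u \in tcomp x y -> u \in tcomp y x -> False.
Proof.
move=> txy; rewrite !inE => /andP[ux c1] /andP[uy c2].
pose t' := [rel a b | t a b && ~~ (((a == x) && (b == y)) || ((a == y) && (b == x)))].
have sub1 z : subrel (avoid z) t' -> True by [].
have s1 : subrel (avoid x) t'.
  move=> a b /= /and3P[tab ax bx]; by rewrite tab (negbTE ax) (negbTE bx) /= !andbF.
have s2 : subrel (avoid y) t'.
  move=> a b /= /and3P[tab ay by']; by rewrite tab (negbTE ay) (negbTE by') /= !andbF.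
have c1' : connect t' y u by apply: connect_sub c1 => a b /s1 /connect1.
have c2' : connect t' u x.
  rewrite avoid_sym in c2; by apply: connect_sub c2 => a b /s2 /connect1.
have [p [pth uq lst]] := connect_uniqP (connect_trans c1' c2').
have xy : x != y by apply: contraTneq txy => ->; rewrite tirr.
case: p pth uq lst => [|z p] /=; first by move=> _ _ E; rewrite E eqxx in xy.
case: p => [|w p] /=.
  by move=> /andP[/andP[_]]; rewrite eqxx andbT eq_sym (negbTE xy) /= => E _ _ E'; rewrite E' eqxx in E.
move=> pth uq lst.
have := tacyc (s := [:: y, z, w & p]) uq; rewrite /= ltnS ltnS => /(_ isT).
rewrite /cycle rcons_path.
have pt : path t y [:: z, w & p].
  have st : subrel t' t by move=> a b /andP[].
  exact: (sub_path st (pth : path t' y [:: z, w & p])).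
move: pt => /= /and3P[-> -> ->]; by rewrite lst txy.
Qed.

Lemma outside x y u : x != y -> u != y -> u \notin tcomp y x -> u \in tcomp x y.
Proof.
move=> xy uy; rewrite !inE uy /= => cn.
have ux : u != x by apply: contraNneq cn => ->; rewrite connect0.
rewrite ux /=; have [p [pth uq lst]] := connect_uniqP (tconn x u).
have yp : y \in x :: p.
  apply: contraNT cn => yn; apply/connectP; exists p => //; exact: path_avoid.
move: yp; rewrite inE => /predU1P[yx|yp].
  by rewrite yx eqxx in xy.
case/splitPr: yp pth uq lst => p1 p2.
rewrite cat_path last_cat /= => /andP[_ /andP[_ pth2]] uq lst.
apply/connectP; exists p2 => //; apply: path_avoid => //.
move: uq => /andP[xn _]; apply: contra xn; rewrite mem_cat => ->; by rewrite orbT.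
Qed.

End Tree.


Lemma partition_lem (T : finType) (W : {set T}) (sb : rel T) n :
  #|W| <= n ->
  (forall w, w \in W -> sb w w) -> (forall w w', sb w w' -> sb w' w) ->
  (forall w1 w2 w3, w2 \in W -> sb w1 w2 -> sb w2 w3 -> sb w1 w3) ->
  (forall w, w \in W -> 2 * #|[set w' in W | sb w w']| <= n) ->
  exists W1 : {set T}, [/\ W1 \subset W,
     (forall w w', w \in W1 -> w' \in W -> sb w w' -> w' \in W1),
     3 * #|W1| <= 2 * n & 3 * #|W :\: W1| <= 2 * n].
Proof.
move=> hW refl sym trans hK.
pose K w := [set w' in W | sb w w'].
have KW w : K w \subset W by apply/subsetP => z; rewrite inE => /andP[].
have Kcl w w1 w' : w1 \in K w -> w' \in W -> sb w1 w' -> w' \in K w.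
  rewrite !inE => /andP[w1W sw1] w'W s1; rewrite w'W /=; exact: trans sw1 s1.
have cardD (A : {set T}) : A \subset W -> #|W :\: A| = #|W| - #|A|.
  by move=> sub; rewrite cardsD (setIidPr sub).
have cardW (A : {set T}) : A \subset W -> #|A| <= #|W| by move=> sub; exact: subset_leq_card.
case: (boolP [exists w in W, n <= 3 * #|K w|]).
  case/exists_inP => w wW big; exists (K w); split => //.
  - move=> w1 w' w1K w'W s; exact: Kcl w1K w'W s.
  - have := hK w wW; rewrite -/(K w); lia.
  - rewrite cardD //; have := cardW _ (KW w); lia.
rewrite negb_exists_in => /forall_inP small.
pose P (S : {set T}) := [&& S \subset W, [forall w in S, forall w' in W, sb w w' ==> (w' \in S)] & 3 * #|S| <= 2 * n].
have P0 : P set0 by rewrite /P sub0set cards0 muln0 leq0n andbT; apply/forall_inP => z; rewrite inE.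
case: (arg_maxnP (fun S : {set T} => #|S|) P0) => W1 /and3P[sub cl sz] maxi.
have clW1 : forall w w', w \in W1 -> w' \in W -> sb w w' -> w' \in W1.
  move=> w w' wW1 w'W s; move/forall_inP: cl => /(_ w wW1) /forall_inP /(_ w' w'W).
  by rewrite s.
exists W1; split => //.
rewrite leqNgt; apply/negP => big.
have sm : 3 * #|W1| < n by move: big; rewrite cardD //; lia.
have : 0 < #|W :\: W1| by lia.
rewrite card_gt0 => /set0Pn [w]; rewrite inE => /andP[wn1 wW].
have wK : w \in K w by rewrite inE wW refl.
have Kdis : [disjoint W1 & K w].
  apply/pred0P => z /=; apply/negbTE/negP => /andP[zW1]; rewrite inE => /andP[zW swz].
  by move: wn1; rewrite (clW1 z w zW1 wW (sym _ _ swz)).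
have PS : P (W1 :|: K w).
  apply/and3P; split.
  - by rewrite subUset sub KW.
  - apply/forall_inP => z; rewrite inE => /orP[zW1|zK]; apply/forall_inP => z' z'W; apply/implyP => s.
    + by rewrite inE (clW1 z z' zW1 z'W s).
    + by rewrite inE (Kcl _ _ _ zK z'W s) orbT.
  - have := small w wW; rewrite -ltnNge => sK.
    case: (leq_card_setU W1 (K w)) => le _; lia.
have := maxi _ PS.
have : W1 \proper W1 :|: K w.
  apply/properP; split; first exact: subsetUl.
  by exists w; [rewrite inE wK orbT | ].
move/proper_card; lia.
Qed.

Lemma alpha_le_card (V : finType) (e : rel V) (X : {set V}) : alpha e X <= #|X|.
Proof.
apply/bigmax_leqP => S /andP[sub _]; exact: subset_leq_card.
Qed.

Lemma alpha_sub (V : finType) (e : rel V) (X Y : {set V}) : X \subset Y -> alpha e X <= alpha e Y.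
Proof.
move=> XY; apply/bigmax_leqP => S /andP[sub ind]; apply: leq_bigmax_cond.
by rewrite ind (subset_trans sub XY).
Qed.

Lemma indep_sub (V : finType) (e : rel V) (S S' : {set V}) : S' \subset S -> indep e S -> indep e S'.
Proof.
move=> sub /forall_inP H; apply/forall_inP => x xS; apply/forall_inP => y yS.
by move/forall_inP: (H x (subsetP sub x xS)) => /(_ y (subsetP sub y yS)).
Qed.

Lemma alpha_U (V : finType) (e : rel V) (X Y : {set V}) : alpha e (X :|: Y) <= alpha e X + alpha e Y.
Proof.
apply/bigmax_leqP => S /andP[sub ind].
have h1 : #|S :&: X| <= alpha e X.
  apply: leq_bigmax_cond; rewrite subsetIr; exact: indep_sub (subsetIl _ _) ind.
have h2 : #|S :&: Y| <= alpha e Y.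
  apply: leq_bigmax_cond; rewrite subsetIr; exact: indep_sub (subsetIl _ _) ind.
have : S \subset (S :&: X) :|: (S :&: Y) by rewrite -setIUr; apply/subsetIP; split.
move/subset_leq_card => h; case: (leq_card_setU (S :&: X) (S :&: Y)) => le _; lia.
Qed.


Section Decomp.
Variables (V : finType) (e : rel V) (C : {set V}) (I : finType) (t : rel I) (bag : I -> {set V}).
Hypothesis td : tree_decomp_of e C t bag.

Let tsym : symmetric t. Proof. by case: td => [[]]. Qed.
Let tirr : irreflexive t. Proof. by case: td => [[]]. Qed.
Let tconn : forall x y, connect t x y. Proof. by case: td => [[]]. Qed.
Let tacyc : forall s : seq I, uniq s -> 3 <= size s -> ~~ cycle t s. Proof. by case: td => [[]]. Qed.
Let tne : 0 < #|I|. Proof. by case: td => [[]]. Qed.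

Definition wset x u := [set w in C | (w \notin bag x) && [exists a in tcomp t x u, w \in bag a]].

Lemma bag_conn w a b x : w \in C -> w \in bag a -> w \in bag b -> w \notin bag x ->
  connect (avoid t x) a b.
Proof.
move=> wC wa wb wx; case: td => _ _ _ _ /(_ w wC a b wa wb).
apply: connect_sub => a' b' /= /and3P[tab wa' wb']; apply: connect1 => /=.
rewrite tab /=; apply/andP; split; apply/negP => /eqP E; move: wx; by rewrite -E ?wa' ?wb'.
Qed.

Lemma wset_disj x y : t x y -> #|wset y x| + #|wset x y| <= #|C|.
Proof.
move=> txy.
have dis : wset y x :&: wset x y = set0.
  apply/setP => w; rewrite !inE.
  apply/negbTE/negP => /andP[/and3P[wC wy /exists_inP[a ain wa]] /and3P[_ wx /exists_inP[b bin wb]]].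
  have cab := bag_conn wC wa wb wy.
  apply: (acyc tsym tirr tacyc (x := x) (y := y) (u := b)) => //.
  move: ain; rewrite !inE => /andP[_ cxa]; rewrite (connect_trans cxa cab) andbT.
  by apply: contraNneq wy => <-.
have := cardsUI (wset y x) (wset x y); rewrite dis cards0 addn0 => <-.
apply: subset_leq_card; apply/subsetP => w; rewrite !inE => /orP[] /andP[] //.
Qed.

Lemma centroid : exists x, forall u, u != x -> 2 * #|wset x u| <= #|C|.
Proof.
pose H m := [exists x, exists u, [&& u != x, #|C| < 2 * #|wset x u| & #|tcomp t x u| == m]].
case: (boolP [exists m : 'I_#|I|.+1, H m]) => [hex|hno]; last first.
  have : exists x : I, true.
    by move: tne => /card_gt0P[x _]; exists x.
  case=> x _; exists x => u ux; rewrite leqNgt; apply/negP => big.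
  move/negP: hno; apply; apply/existsP.
  have lt : #|tcomp t x u| < #|I|.+1 by rewrite ltnS max_card.
  exists (Ordinal lt); apply/existsP; exists x; apply/existsP; exists u; by rewrite ux big eqxx.
have ex : exists m, H m by case/existsP: hex => m hm; exists (nat_of_ord m).
case: (ex_minnP ex) => m /existsP[x /existsP[u /and3P[ux big /eqP cm]]] minm.
have [y txy yc] := step tsym tconn ux.
have cxy : tcomp t x y = tcomp t x u := comp_eq tsym yc.
have xy : x != y by apply: contraTneq txy => ->; rewrite tirr.
exists y => u' u'y; rewrite leqNgt; apply/negP => big'.
have dis : forall v, v \in tcomp t y u' -> v \notin tcomp t y x.
  move=> v vin; apply/negP => vin2.
  have e1 := comp_eq tsym vin; have e2 := comp_eq tsym vin2.
  have := wset_disj txy; rewrite /wset -e2 e1 cxy -/(wset y u') -/(wset x u); lia.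
have sub : tcomp t y u' \proper tcomp t x u.
  apply/properP; split.
    apply/subsetP => v vin; rewrite -cxy; apply: outside => //.
      by move: vin; rewrite inE => /andP[].
    exact: dis.
  by exists y => //; rewrite inE eqxx.
have := minm #|tcomp t y u'|.
have -> : H #|tcomp t y u'|.
  by apply/existsP; exists y; apply/existsP; exists u'; rewrite u'y big' eqxx.
move/(_ isT); move/proper_card: sub; rewrite cm; lia.
Qed.

Lemma sep_tree k : symmetric e -> (forall i, alpha e (bag i) <= k) ->
  exists A B : {set V}, balanced_sep e A B /\ alpha e (A :&: B) <= k + #|~: C|.
Proof.
move=> esym hk; have [x cen] := centroid.
have [_ _ cov edg subt] := td.
set W := C :\: bag x.
have hW z : (z \in W) = (z \in C) && (z \notin bag x) by rewrite !inE andbC.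
have Wle : #|W| <= #|V| by apply: max_card.
clearbody W.
pose sb := [rel w w' | [exists a, exists b, [&& w \in bag a, w' \in bag b, a != x, b != x & connect (avoid t x) a b]]].
have bagnx w a : w \in W -> w \in bag a -> a != x.
  by rewrite hW => /andP[_ wx] wa; apply: contraNneq wx => <-.
have srefl : forall w, w \in W -> sb w w.
  move=> w wW; have [a wa] : exists a, w \in bag a by apply: cov; move: wW; rewrite hW => /andP[].
  apply/existsP; exists a; apply/existsP; exists a; by rewrite wa (bagnx w a wW wa) connect0.
have ssym : forall w w', sb w w' -> sb w' w.
  move=> w w' /existsP[a /existsP[b /and5P[wa wb ax bx cab]]].
  apply/existsP; exists b; apply/existsP; exists a; rewrite wa wb ax bx /=.
  by rewrite (avoid_sym tsym).
have strans : forall w1 w2 w3, w2 \in W -> sb w1 w2 -> sb w2 w3 -> sb w1 w3.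
  move=> w1 w2 w3 w2W /existsP[a /existsP[b /and5P[wa wb ax bx cab]]].
  move=> /existsP[b' /existsP[c /and5P[wb' wc bx' cx cbc]]].
  apply/existsP; exists a; apply/existsP; exists c; rewrite wa wc ax cx /=.
  move: w2W; rewrite hW => /andP[w2C w2x].
  exact: connect_trans (connect_trans cab (bag_conn w2C wb wb' w2x)) cbc.
have hK : forall w, w \in W -> 2 * #|[set w' in W | sb w w']| <= #|V|.
  move=> w wW; have [a wa] : exists a, w \in bag a by apply: cov; move: wW; rewrite hW => /andP[].
  have ax := bagnx w a wW wa.
  have : [set w' in W | sb w w'] \subset wset x a.
    apply/subsetP => w'; rewrite !inE => /andP[w'W /existsP[a0 /existsP[b /and5P[wa0 wb ax0 bx cab]]]].
    move: (w'W); rewrite hW => /andP[w'C w'x]; rewrite w'C w'x /=.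
    apply/exists_inP; exists b => //; rewrite inE bx /=.
    move: wW; rewrite hW => /andP[wC wx].
    exact: connect_trans (bag_conn wC wa wa0 wx) cab.
  move/subset_leq_card => le; have := cen a ax; have : #|C| <= #|V| by apply: max_card.
  lia.
have [W1 [W1W clW1 sz1 sz2]] := partition_lem Wle srefl ssym strans hK.
exists (~: (W :\: W1)), (~: W1).
have W1W' := subsetP W1W.
have AB : ~: (W :\: W1) :\: ~: W1 = W1.
  apply/setP => z; rewrite !in_setD !in_setC negbK; case: (boolP (z \in W1)) => h //=.
  by rewrite in_setD h.
have BA : ~: W1 :\: ~: (W :\: W1) = W :\: W1.
  apply/setP => z; rewrite !in_setD !in_setC negbK in_setD andbC.
  by case: (z \in W1); case: (z \in W).
have noedge w w' : w \in W1 -> w' \in W :\: W1 -> e w w' = false.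
  move=> wW1; rewrite in_setD => /andP[w'n w'W]; apply/negbTE/negP => ew.
  have wW := W1W' w wW1.
  move: (wW) (w'W); rewrite !hW => /andP[wC wx] /andP[w'C w'x].
  have [i /andP[wi w'i]] := edg w w' wC w'C ew.
  have ix := bagnx w i wW wi.
  have : sb w w' by apply/existsP; exists i; apply/existsP; exists i; rewrite wi w'i ix connect0.
  by move/(clW1 w w' wW1 w'W); rewrite (negbTE w'n).
split.
  apply/and3P; split; rewrite ?AB ?BA //.
  rewrite /separation AB BA; apply/andP; split.
    apply/eqP/setP => z; rewrite !inE; by case: (z \in W1); case: (z \in W).
  apply/forall_inP => w wW1; apply/forall_inP => w' w'W; by rewrite [e w' w]esym (noedge w w').
have sub : ~: (W :\: W1) :&: ~: W1 \subset bag x :|: ~: C.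
  apply/subsetP => z; rewrite !inE hW.
  by case: (z \in W1); case: (z \in C); case: (z \in bag x).
apply: leq_trans (alpha_sub e sub) _; apply: leq_trans (alpha_U _ _ _) _.
apply: leq_add; [exact: hk | exact: alpha_le_card].
Qed.

End Decomp.


Lemma s_alpha_le (V : finType) (e : rel V) (A B : {set V}) :
  balanced_sep e A B -> s_alpha e <= alpha e (A :&: B).
Proof.
move=> bal; rewrite /s_alpha.
have : (A, B) \in index_enum (prod {set V} {set V}) by rewrite mem_index_enum.
elim: (index_enum _) => [|p r IH]; first by [].
rewrite big_cons inE => /predU1P[<-|pin]; first by rewrite bal /= geq_minl.
case: ifP => _; last exact: IH.
by rewrite geq_min IH ?orbT.
Qed.

Lemma s_alpha_leV (V : finType) (e : rel V) : s_alpha e <= #|V|.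
Proof.
rewrite /s_alpha; elim/big_ind: _ => [//| a b ha hb | p _]; first by rewrite geq_min ha.
apply: leq_trans (alpha_le_card _ _) _; exact: max_card.
Qed.

Lemma count_sum (V : finType) (cs : seq {set V}) :
  \sum_(v : V) count (fun C : {set V} => v \in C) cs = \sum_(C <- cs) #|C|.
Proof.
elim: cs => [|C cs IH] /=; first by rewrite big_nil big1.
rewrite big_cons big_split /= IH; congr (_ + _).
by rewrite -sum1_card [RHS]big_mkcond /=; apply: eq_bigr => i _; case: (i \in C).
Qed.

Lemma ar (a b s N r : nat) : b + s * (N + 1) <= s * (r * N) -> a + N + 1 <= r * N ->
  a + b + (N + 1 + s * (N + 1)) <= r * N + s * (r * N).
Proof. lia. Qed.

Lemma ar2 (N r s X : nat) : 0 < r -> 0 < s -> N * ((r - 1) * s) <= X ->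
  X + s * (N + 1) <= s * (r * N) -> False.
Proof.
case: r => // r _ s0; rewrite subSS subn0 => h1 h2.
have : N * (r * s) + s * (N + 1) <= s * (r.+1 * N) by lia.
nia.
Qed.

Lemma avg (V : finType) r (cs : seq {set V}) : 0 < r -> general_cover r cs ->
  exists2 C, C \in cs & r * #|~: C| <= #|V|.
Proof.
move=> r0 [s0 hv].
case: (boolP (has (fun C : {set V} => r * #|~: C| <= #|V|) cs)) => [/hasP[C Cin h]|hn]; first by exists C.
exfalso; move/hasPn: hn => hn.
have H1 : #|V| * ((r - 1) * size cs) <= r * \sum_(C <- cs) #|C|.
  rewrite -count_sum big_distrr /=.
  have -> : #|V| * ((r-1)*size cs) = \sum_(v:V) ((r-1)*size cs) by rewrite sum_nat_const.
  by apply: leq_sum => v _; exact: hv.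
have H2 : forall C, C \in cs -> r * #|C| + #|V| + 1 <= r * #|V|.
  move=> C Cin; have := hn C Cin; rewrite -ltnNge -(cardsC C) mulnDr; lia.
have H3 : r * \sum_(C <- cs) #|C| + size cs * (#|V| + 1) <= size cs * (r * #|V|).
  elim: cs {hv s0 H1 hn} H2 => [|C cs IH] H2; first by rewrite big_nil muln0.
  rewrite big_cons /= mulnDr.
  have := H2 C (mem_head _ _).
  have := IH (fun C' (C'in : C' \in cs) => H2 C' (etrans (in_cons _ _ _) (introT orP (or_intror C'in)))).
  rewrite !mulSn => h1 h2; exact: ar h1 h2.
exact: ar2 r0 s0 H1 H3.
Qed.

Theorem lemma5p4 (P : graph_class) :
  (forall (V : finType) (e : rel V), P V e -> simple_graph e) ->
  frac_tree_alpha_fragile P ->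
  (forall c : nat, exists k : nat, forall (V : finType) (e : rel V),
      P V e -> k <= #|V| -> c * s_alpha e < #|V|)
  /\ sublinear_separators P.
Proof.
move=> hsimp [f hf].
have part1 : forall c : nat, exists k : nat, forall (V : finType) (e : rel V),
    P V e -> k <= #|V| -> c * s_alpha e < #|V|.
  move=> c; exists (2 * c * f (2 * c + 1)).+1 => V e hP hk.
  have r0 : 0 < 2 * c + 1 by rewrite addn1.
  have [cs [gc hcs]] := hf (2 * c + 1) r0 V e hP.
  have [C Cin hC] := avg r0 gc.
  have [I [t [bag [td hb]]]] := hcs C Cin.
  have [A [B [bal al]]] := sep_tree td (proj1 (hsimp V e hP)) hb.
  have hs := s_alpha_le bal.
  have := leq_mul (leqnn c) (leq_trans hs al).
  move: hk hC; move: (s_alpha e) (f (2 * c + 1)) #|~: C| #|V| => s F m N.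
  nia.
split => //.
move=> c c0; have [k hk] := part1 c; exists (c * k).+1 => n hn V e hP hV.
case: (leqP k #|V|) => h.
  have := hk V e hP h; lia.
have := leq_mul (leqnn c) (s_alpha_leV e).
have := leq_mul (leqnn c) (ltnW h).
move: hn hV; move: (s_alpha e) #|V| => s N; lia.
Qed.
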